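(* Let $(X_i)_{i\in\mathbb{T}}$ ($\mathbb{T}$ one of $\mathbb{Z},\mathbb{N},\mathbb{N}\setminus\{0\}$) be a stationary sequence of $\mathbb{R}^d$-valued random variables such that the distribution of $X_1$ is supported on a compact set $\mathbb{M}\subset\mathbb{R}^d$. Let $n\ge1$, $\epsilon>0$, and let $k,r$ be positive integers with $kr\le n$. For $1\le i\le k$ let $Y_{i,r}=(X_{(i-1)r+1},\ldots,X_{ir})^t\in\mathbb{R}^{dr}$, let $\mathbb{Y}_k=\{Y_{1,r},\ldots,Y_{k,r}\}$, and let $\mathbb{M}_{dr}\subset\mathbb{R}^{dr}$ be the support of $Y_{1,r}$. Then, with $\mathbb{X}_n=\{X_1,\ldots,X_n\}$, $$\mathbb{P}\big(d_H(\mathbb{X}_n,\mathbb{M})>\epsilon\big)\le \mathbb{P}\big(d_H(\mathbb{Y}_k,\mathbb{M}_{dr})>\epsilon\big)\le \frac{\sup_{x\in\mathbb{M}_{dr}}\mathbb{P}\big(\min_{1\le i\le k}\|Y_{i,r}-x\|>\epsilon/2\big)}{1-\sup_{x\in\mathbb{M}_{dr}}\mathbb{P}\big(\|Y_{1,r}-x\|>\epsilon/4\big)}.$$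
   Context: The support of a random vector is the smallest closed set carrying its full mass. Norms are Euclidean. $d_H$ is the Hausdorff distance between closed sets: $d_H(A,B)=\max\big(\sup_{x\in A}\inf_{y\in B}\|x-y\|,\ \sup_{x\in B}\inf_{y\in A}\|x-y\|\big)$; finite sets of random points are viewed as subsets of the ambient Euclidean space. *)

(* Defs.v *)
From HB Require Import structures.
From mathcomp Require Import all_boot all_order all_algebra.
From mathcomp Require Import all_classical all_reals all_analysis.
Set Implicit Arguments. Unset Strict Implicit. Unset Printing Implicit Defensive.
Import Order.TTheory GRing.Theory Num.Theory.
Import numFieldNormedType.Exports.
Local Open Scope classical_set_scope.
Local Open Scope ring_scope.

Definition enorm {R : realType} {n : nat} (v : 'rV[R]_n) : R :=
  Num.sqrt (\sum_(j < n) v ord0 j ^+ 2).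

Definition borel {U : topologicalType} (B : set U) : Prop := <<s open >> B.

Definition random_vector {d0 : measure_display} {T : measurableType d0}
  {R : realType} {n : nat} (Z : T -> 'rV[R]_n) : Prop :=
  forall B : set 'rV[R]_n, borel B -> measurable (Z @^-1` B).

Definition same_law {d0 : measure_display} {T : measurableType d0}
  {R : realType} (P : probability T R) {m n : nat}
  (Z1 Z2 : T -> 'M[R]_(m, n)) : Prop :=
  forall B : set 'M[R]_(m, n), borel B -> P (Z1 @^-1` B) = P (Z2 @^-1` B).

Definition stationary {d0 : measure_display} {T : measurableType d0}
  {R : realType} (P : probability T R) {d : nat} (X : nat -> T -> 'rV[R]_d)
  : Prop :=
  forall (m : nat) (ts : 'I_m -> nat) (s : nat),
    same_law P (fun w => \matrix_(j < m, l < d) X (ts j + s)%N w ord0 l)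
               (fun w => \matrix_(j < m, l < d) X (ts j) w ord0 l).

Definition is_support {d0 : measure_display} {T : measurableType d0}
  {R : realType} (P : probability T R) {n : nat} (Z : T -> 'rV[R]_n)
  (S : set 'rV[R]_n) : Prop :=
  [/\ closed S, P (Z @^-1` S) = 1%E &
      forall C : set 'rV[R]_n, closed C -> P (Z @^-1` C) = 1%E -> S `<=` C].

Definition eucl_dist {R : realType} {n : nat} (x y : 'rV[R]_n) : R := enorm (x - y).

Definition hausdorff {R : realType} {n : nat} (A B : set 'rV[R]_n) : \bar R :=
  maxe (ereal_sup [set ereal_inf [set (eucl_dist x y)%:E | y in B] | x in A])
       (ereal_sup [set ereal_inf [set (eucl_dist x y)%:E | y in A] | x in B]).

(* block vector Y_{i,r} = (X_{ir}, ..., X_{ir+r-1}) in R^{rd}, 0-based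
   (paper's Y_{i+1,r} = (X_{ir+1},...,X_{(i+1)r}) with X_{t} := X (t-1)) *)
Definition block {T : Type} {R : realType} {d : nat} (X : nat -> T -> 'rV[R]_d)
  (r i : nat) (w : T) : 'rV[R]_(r * d) :=
  mxvec (\matrix_(j < r, l < d) X (i * r + j)%N w ord0 l).

(* Main.v *)
Require Import Defs.
From HB Require Import structures.
From mathcomp Require Import all_boot all_order all_algebra.
From mathcomp Require Import all_classical all_reals all_analysis.
From mathcomp Require Import ring lra zify.
Set Implicit Arguments. Unset Strict Implicit. Unset Printing Implicit Defensive.
Import Order.TTheory GRing.Theory Num.Theory.
Import numFieldNormedType.Exports.
Local Open Scope classical_set_scope.
Local Open Scope ring_scope.

Lemma sumsq_ge0 (R : realType) m (v : 'rV[R]_m) : 0 <= \sum_(j < m) v ord0 j ^+ 2.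
Proof. by apply: sumr_ge0 => j _; exact: sqr_ge0. Qed.

Lemma enorm_ge0 (R : realType) m (v : 'rV[R]_m) : 0 <= enorm v.
Proof. exact: sqrtr_ge0. Qed.

Lemma enorm_sq (R : realType) m (v : 'rV[R]_m) :
  enorm v ^+ 2 = \sum_(j < m) v ord0 j ^+ 2.
Proof. by rewrite /enorm sqr_sqrtr // sumsq_ge0. Qed.

Lemma coord_le_enorm (R : realType) m (v : 'rV[R]_m) p : `|v ord0 p| <= enorm v.
Proof.
rewrite /enorm -sqrtr_sqr ler_sqrt ?sumsq_ge0 //.
rewrite (bigD1 p) //= lerDl; apply: sumr_ge0 => j _; exact: sqr_ge0.
Qed.

Lemma enormN (R : realType) m (v : 'rV[R]_m) : enorm (- v) = enorm v.
Proof. by rewrite /enorm; congr Num.sqrt; apply: eq_bigr => j _; rewrite mxE sqrrN. Qed.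

Lemma dist_sym (R : realType) m (x y : 'rV[R]_m) : eucl_dist x y = eucl_dist y x.
Proof. by rewrite /eucl_dist -enormN opprB. Qed.

Lemma dist_ge0 (R : realType) m (x y : 'rV[R]_m) : 0 <= eucl_dist x y.
Proof. exact: enorm_ge0. Qed.

Lemma dist_xx (R : realType) m (x : 'rV[R]_m) : eucl_dist x x = 0.
Proof.
rewrite /eucl_dist /enorm subrr (eq_bigr (fun _ => 0)) ?big1 ?sqrtr0 //.
by move=> j _; rewrite mxE expr0n.
Qed.

Lemma cauchy_schwarz (R : realType) m (a b : 'rV[R]_m) :
  \sum_(j < m) a ord0 j * b ord0 j <= enorm a * enorm b.
Proof.
set al := enorm a; set be := enorm b.
have al0 : 0 <= al by exact: enorm_ge0.
have be0 : 0 <= be by exact: enorm_ge0.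
have key : 2 * (\sum_(j < m) a ord0 j * b ord0 j) * (al * be) <= 2 * (al ^+ 2 * be ^+ 2).
  have -> : 2 * (al ^+ 2 * be ^+ 2) = al ^+ 2 * be ^+ 2 + be ^+ 2 * al ^+ 2 by ring.
  rewrite {1}/al {1}/be !enorm_sq !mulr_suml -big_split /= mulr_sumr mulr_suml.
  apply: ler_sum => j _.
  have := sqr_ge0 (a ord0 j * be - b ord0 j * al).
  rewrite /al /be -!enorm_sq; nra.
have [P0|Pn0] := eqVneq (al * be) 0.
  rewrite P0; move/eqP: P0; rewrite mulf_eq0 => /orP[] /eqP z.
  - have az : forall j, a ord0 j = 0.
      by move=> j; apply/eqP; rewrite -normr_eq0 eq_le normr_ge0 andbT -z coord_le_enorm.
    by rewrite big1 // => j _; rewrite az mul0r.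
  - have bz : forall j, b ord0 j = 0.
      by move=> j; apply/eqP; rewrite -normr_eq0 eq_le normr_ge0 andbT -z coord_le_enorm.
    by rewrite big1 // => j _; rewrite bz mulr0.
have pos : 0 < al * be by rewrite lt0r Pn0 mulr_ge0.
have : (\sum_(j < m) a ord0 j * b ord0 j) * (al * be) <= (al * be) * (al * be).
  by move: key; nra.
by rewrite ler_pM2r.
Qed.

Lemma enorm_triangle (R : realType) m (a b : 'rV[R]_m) :
  enorm (a + b) <= enorm a + enorm b.
Proof.
have h0 : 0 <= enorm a + enorm b by rewrite addr_ge0 ?enorm_ge0.
rewrite -(ler_pXn2r (_ : (0 < 2)%N)) ?nnegrE ?enorm_ge0 //.
rewrite enorm_sq sqrrD !enorm_sq.
have -> : \sum_(j < m) (a + b) ord0 j ^+ 2 =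
  \sum_(j < m) a ord0 j ^+ 2 + (\sum_(j < m) a ord0 j * b ord0 j) *+ 2 +
  \sum_(j < m) b ord0 j ^+ 2.
  rewrite -sumrMnl -!big_split /=; apply: eq_bigr => j _; rewrite mxE; ring.
have := cauchy_schwarz a b; lra.
Qed.

Lemma dist_triangle (R : realType) m (x y z : 'rV[R]_m) :
  eucl_dist x z <= eucl_dist x y + eucl_dist y z.
Proof.
rewrite /eucl_dist (_ : x - z = (x - y) + (y - z)); first exact: enorm_triangle.
by rewrite addrA subrK.
Qed.

Lemma enorm_small (R : realType) m (v : 'rV[R]_m) (e : R) : 0 < e ->
  (forall p, `|v ord0 p| < e / m.+1%:R) -> enorm v < e.
Proof.
move=> e0 hv; rewrite /enorm -(@ger0_norm _ e) ?ltW // -sqrtr_sqr.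
rewrite ltr_sqrt ?exprn_gt0 //.
apply: (@le_lt_trans _ _ (\sum_(j < m) (e / m.+1%:R) ^+ 2)).
  apply: ler_sum => j _; rewrite -real_normK ?num_real //.
  have hp : 0 < e / m.+1%:R by rewrite divr_gt0 ?ltr0Sn.
  by rewrite lerXn2r ?nnegrE ?normr_ge0 ?(ltW hp) ?(ltW (hv j)).
rewrite big_const_ord iter_addr_0 expr_div_n -mulr_natr.
have -> : e ^+ 2 / (1 * m.+1%:R) ^+ 2 *+ m = e ^+ 2 * (m%:R / m.+1%:R ^+ 2) by rewrite mul1r -mulr_natr; ring.
rewrite gtr_pMr ?exprn_gt0 // ltr_pdivrMr ?exprn_gt0 ?ltr0Sn // mul1r -natrX ltr_nat; nia.
Qed.

Lemma entry_le_norm (R : realType) m n (A : 'M[R]_(m, n)) i j : `|A i j| <= `|A|.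
Proof.
have /mapP[k Hk ->] : `|A i j| \in [seq `|A x.1 x.2| | x : 'I_m * 'I_n].
  by apply/mapP; exists (i, j) => //=; rewrite mem_enum.
by rewrite [leRHS]/Num.norm /= mx_normrE; apply/bigmax_geP; right => /=; exists k.
Qed.

Lemma norm_lt_entries (R : realType) m n (A : 'M[R]_(m, n)) e : 0 < e ->
  (forall i j, `|A i j| < e) -> `|A| < e.
Proof.
move=> e0 h; rewrite /Num.norm /= mx_normrE.
by apply/bigmax_ltP; split => //= k _; exact: h.
Qed.

Lemma nbhs_enorm (R : realType) m (x : 'rV[R]_m) (U : set 'rV[R]_m) :
  nbhs x U -> exists2 e : R, 0 < e & forall y, eucl_dist x y < e -> U y.
Proof.
move=> /nbhs_ballP [e e0 hU]; exists e => // y hy; apply: hU.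
rewrite -ball_normE /ball_ /=; apply: norm_lt_entries => // i j.
rewrite (ord1 i); exact: le_lt_trans (coord_le_enorm _ _) hy.
Qed.

Lemma ball_enorm (R : realType) m (x y : 'rV[R]_m) e : 0 < e ->
  ball x (e / m.+1%:R) y -> eucl_dist x y < e.
Proof.
move=> e0; rewrite -ball_normE /ball_ /= => h.
apply: enorm_small => // p; exact: le_lt_trans (entry_le_norm _ _ _) h.
Qed.

Lemma closed_enorm (R : realType) m (S : set 'rV[R]_m) x : closed S ->
  (forall d : R, 0 < d -> exists2 y, S y & eucl_dist x y < d) -> S x.
Proof.
move=> cS h; rewrite (closure_id S).1 //= => U /nbhs_enorm [e e0 hU].
by have [y Sy hy] := h e e0; exists y; split => //; exact: hU.
Qed.

Lemma borelI (U : ptopologicalType) (A B : set U) : borel A -> borel B -> borel (A `&` B).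
Proof. exact: (@measurableI _ (g_sigma_algebraType (@open U))). Qed.

Lemma borelC (U : ptopologicalType) (A : set U) : borel A -> borel (~` A).
Proof. exact: (@measurableC _ (g_sigma_algebraType (@open U))). Qed.

Lemma borel_open (U : ptopologicalType) (A : set U) : open A -> borel A.
Proof. by move=> oA; apply: sub_sigma_algebra. Qed.

Lemma borel_closed (U : ptopologicalType) (A : set U) : closed A -> borel A.
Proof. by move=> cA; rewrite -(setCK A); apply: borelC; apply: borel_open; exact: closed_openC. Qed.

Lemma rv_coord (R : realType) d0 (T : measurableType d0) n (Z : T -> 'rV[R]_n) :
  random_vector Z -> forall p, measurable_fun setT (fun w => Z w ord0 p).
Proof.
move=> hZ p; apply: (@measurability _ _ _ _ _ _ (@ocitv R)); first by [].
move=> S [B [[a b] _ <-] <-]; rewrite setTI.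
have -> : (fun w => Z w ord0 p) @^-1` `]a, b]%classic =
   Z @^-1` ([set v : 'rV[R]_n | a < v ord0 p] `&` ~` [set v | b < v ord0 p]).
  apply/seteqP; split => w /=; rewrite in_itv /=.
    by move=> /andP[h1 h2]; split => //; apply/negP; rewrite -leNgt.
  by move=> [h1 /negP]; rewrite -leNgt => h2; rewrite h1 h2.
have oc : forall c : R, open [set v : 'rV[R]_n | c < v ord0 p].
  move=> c.
  have -> : [set v : 'rV[R]_n | c < v ord0 p] = (fun v : 'rV[R]_n => v ord0 p) @^-1` `]c, +oo[%classic.
    by apply/seteqP; split => v /=; rewrite in_itv /= andbT.
  apply: open_comp; last exact: interval_open.
  by move=> v _; exact: coord_continuous.
by apply: hZ; apply: borelI; [|apply: borelC]; apply: borel_open; apply: oc.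
Qed.

Definition mvec (R : realType) d0 (T : measurableType d0) m (f : T -> 'rV[R]_m) :=
  forall p, measurable_fun setT (fun w => f w ord0 p).

Lemma mvec_dist (R : realType) d0 (T : measurableType d0) m (f : T -> 'rV[R]_m) y :
  mvec f -> measurable_fun setT (fun w => eucl_dist (f w) y).
Proof.
move=> mf; rewrite /eucl_dist /enorm.
apply: (@measurableT_comp _ _ _ _ _ _ (@Num.sqrt R)).
  by apply: measurable_realfun.continuous_measurable_fun; exact: sqrt_continuous.
apply: measurable_sum => j.
under eq_fun do rewrite mxE.
apply: measurable_realfun.measurable_funX.
by apply: measurable_realfun.measurable_funD => //; exact: measurable_cst.
Qed.

Lemma mvec_dist' (R : realType) d0 (T : measurableType d0) m (f : T -> 'rV[R]_m) y :
  mvec f -> measurable_fun setT (fun w => eucl_dist y (f w)).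
Proof. by move=> mf; under eq_fun do rewrite dist_sym; exact: mvec_dist. Qed.

Lemma mP_gt (R : realType) d0 (T : measurableType d0) (g : T -> R) c :
  measurable_fun setT g -> measurable [set w | c < g w].
Proof.
move=> mg; have := mg measurableT `]c, +oo[%classic (measurable_itv _).
rewrite setTI; congr measurable; apply/seteqP; split => w /=; rewrite in_itv /= ?andbT //.
Qed.

Lemma mP_lt (R : realType) d0 (T : measurableType d0) (g : T -> R) c :
  measurable_fun setT g -> measurable [set w | g w < c].
Proof.
move=> mg; have := mg measurableT `]-oo, c[%classic (measurable_itv _).
rewrite setTI; congr measurable; apply/seteqP; split => w /=; rewrite in_itv /= ?andbT //.
Qed.

Lemma mP_const d0 (T : measurableType d0) (P : Prop) : measurable [set _ : T | P].
Proof.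
case: (pselect P) => hP.
  by rewrite (_ : [set _ | P] = setT) //; apply/seteqP; split.
by rewrite (_ : [set _ | P] = set0) //; apply/seteqP; split.
Qed.

Lemma mP_and d0 (T : measurableType d0) (P Q : T -> Prop) :
  measurable [set w | P w] -> measurable [set w | Q w] -> measurable [set w | P w /\ Q w].
Proof. by move=> hP hQ; exact: measurableI hP hQ. Qed.

Lemma mP_or d0 (T : measurableType d0) (P Q : T -> Prop) :
  measurable [set w | P w] -> measurable [set w | Q w] -> measurable [set w | P w \/ Q w].
Proof. by move=> hP hQ; exact: measurableU hP hQ. Qed.

Lemma mP_not d0 (T : measurableType d0) (P : T -> Prop) :
  measurable [set w | P w] -> measurable [set w | ~ P w].
Proof. by move=> hP; exact: measurableC hP. Qed.

Lemma mP_ex d0 (T : measurableType d0) (I : countType) (Q : I -> T -> Prop) :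
  (forall i, measurable [set w | Q i w]) -> measurable [set w | exists i, Q i w].
Proof.
move=> hQ; rewrite (_ : [set w | exists i, Q i w] = \bigcup_i [set w | Q i w]).
  by apply: countable_bigcupT_measurable => //; exact: countableP.
by apply/seteqP; split => w /= [i hi]; exists i.
Qed.

Lemma mP_all d0 (T : measurableType d0) (I : countType) (Q : I -> T -> Prop) :
  (forall i, measurable [set w | Q i w]) -> measurable [set w | forall i, Q i w].
Proof.
move=> hQ; rewrite (_ : [set w | forall i, Q i w] = ~` [set w | exists i, ~ Q i w]).
  by apply: measurableC; apply: mP_ex => i; apply: mP_not.
apply/seteqP; split => w /=.
  by move=> h [i]; apply.
by move=> h i; apply: contrapT => hn; apply: h; exists i.
Qed.

Lemma mP_imp d0 (T : measurableType d0) (P : Prop) (Q : T -> Prop) :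
  measurable [set w | Q w] -> measurable [set w | P -> Q w].
Proof.
move=> hQ; case: (pselect P) => hP.
  by rewrite (_ : [set w | P -> Q w] = [set w | Q w]) //; apply/seteqP; split => w /=; auto.
by rewrite (_ : [set w | P -> Q w] = setT) //; apply/seteqP; split => w /=.
Qed.

Lemma finite_gap (R : realType) (I : finType) (g : I -> R) (c : R) :
  (forall i, c < g i) -> exists2 e : R, 0 < e & forall i, c + e < g i.
Proof.
move=> hg.
suff [e e0 he] : exists2 e : R, 0 < e & forall i, i \in enum I -> c + e < g i.
  by exists e => // i; apply: he; rewrite mem_enum.
elim: (enum I) => [|a s [e e0 he]]; first by exists 1.
have ha : 0 < (g a - c) / 2 by rewrite divr_gt0 // subr_gt0.
exists (Num.min e ((g a - c) / 2)); first by rewrite lt_min e0 ha.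
move=> i; rewrite inE => /orP[/eqP ->|/he hi].
  have h : Num.min e ((g a - c) / 2) <= (g a - c) / 2 by rewrite ge_min lexx orbT.
  have := hg a; lra.
have h : Num.min e ((g a - c) / 2) <= e by rewrite ge_min lexx.
lra.
Qed.

Lemma rat_pos (R : realType) (a : R) : 0 < a -> exists d : rat, 0 < (ratr d : R) < a.
Proof.
move=> a0; have [d] := rat_in_itvoo a0; rewrite in_itv /= => h; by exists d.
Qed.

Definition rvq (R : realType) m (q : 'rV[rat]_m) : 'rV[R]_m := \row_p ratr (q ord0 p).
Arguments rvq {R m}.

Lemma dense_rat (R : realType) m (x : 'rV[R]_m) (d : R) : 0 < d ->
  exists q : 'rV[rat]_m, eucl_dist x (rvq q) < d.
Proof.
move=> d0; set rho := d / m.+1%:R.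
have rho0 : 0 < rho by rewrite divr_gt0 ?ltr0Sn.
have : forall p : 'I_m, exists z : rat, `|x ord0 p - ratr z| < rho.
  move=> p; have : x ord0 p - rho < x ord0 p + rho by lra.
  move=> /rat_in_itvoo [z]; rewrite in_itv /= => /andP[h1 h2]; exists z.
  rewrite ltr_norml; apply/andP; split; lra.
move=> /choice [g hg]; exists (\row_p g p).
apply: enorm_small => // p; rewrite !mxE; exact: hg.
Qed.

Lemma ev_exists_meas (R : realType) d0 (T : measurableType d0) m k
    (F : 'I_k -> T -> 'rV[R]_m) (S : set 'rV[R]_m) (c : R) :
  (forall i, mvec (F i)) ->
  measurable [set w | exists2 x, S x & forall i, c < eucl_dist x (F i w)].
Proof.
move=> mF.
rewrite (_ : [set w | _] = [set w | exists q : 'rV[rat]_m, exists dl : rat,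
   0 < (ratr dl : R) /\ ((exists2 x, S x & eucl_dist x (rvq q) < ratr dl) /\
   forall i, c + ratr dl < eucl_dist (rvq q) (F i w))]).
  apply: mP_ex => q; apply: mP_ex => dl; apply: mP_and; first exact: mP_const.
  apply: mP_and; first exact: mP_const.
  apply: mP_all => i; apply: mP_gt; exact: mvec_dist'.
apply/seteqP; split => w /=.
  move=> [x Sx hx]; have [e e0 he] := finite_gap hx.
  have [dl /andP[dl0 dle]] := @rat_pos R (e / 2) (divr_gt0 e0 (ltr0Sn _ _)).
  have [q hq] := dense_rat x dl0.
  exists q, dl; split => //; split; first by exists x.
  move=> i; have := dist_triangle x (rvq q) (F i w); have := he i.
  lra.
move=> [q [dl [dl0 [[x Sx hx] hi]]]]; exists x => // i.
have := dist_triangle (rvq q) x (F i w); have := hi i; rewrite dist_sym in hx; lra.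
Qed.

Lemma ev_inf_meas (R : realType) d0 (T : measurableType d0) m
    (f : T -> 'rV[R]_m) (S : set 'rV[R]_m) (c : R) : mvec f ->
  measurable [set w | (c%:E < ereal_inf [set (eucl_dist (f w) y)%:E | y in S])%E].
Proof.
move=> mf.
rewrite (_ : [set w | _] = [set w | exists dl : rat, 0 < (ratr dl : R) /\
   forall q : 'rV[rat]_m, (exists2 y, S y & eucl_dist y (rvq q) < ratr dl) ->
     c + ratr dl *+ 2 < eucl_dist (f w) (rvq q)]).
  apply: mP_ex => dl; apply: mP_and; first exact: mP_const.
  apply: mP_all => q; apply: mP_imp; apply: mP_gt; exact: mvec_dist.
apply/seteqP; split => w /=.
  move=> h.
  have [b cb hb] : exists2 b, c < b & forall y, S y -> b <= eucl_dist (f w) y.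
    have : (c%:E < ereal_inf [set (eucl_dist (f w) y)%:E | y in S])%E /\
      forall y, S y -> (ereal_inf [set (eucl_dist (f w) y)%:E | y in S] <= (eucl_dist (f w) y)%:E)%E.
      by split => // y Sy; apply: ereal_inf_lbound; exists y.
    case: (ereal_inf _) => [a||] [h1 h2].
    - by exists a; [rewrite lte_fin in h1 | move=> y /h2; rewrite lee_fin].
    - by exists (c + 1); [lra | move=> y /h2].
    - by [].
  have bc3 : 0 < (b - c) / 3 by rewrite divr_gt0 // subr_gt0.
  have [dl /andP[dl0 dle]] := @rat_pos R ((b - c) / 3) bc3.
  exists dl; split => // q [y Sy hy].
  have := hb y Sy; have := dist_triangle (f w) (rvq q) y.
  rewrite (dist_sym (rvq q) y) mulr2n; lra.
move=> [dl [dl0 hq]].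
have lt1 : (c%:E < (c + ratr dl)%:E)%E by rewrite lte_fin; lra.
apply: (lt_le_trans lt1); apply/ereal_infP => _ [y Sy <-]; rewrite lee_fin.
have [q hyq] := dense_rat y dl0.
have := hq q (ex_intro2 _ _ y Sy hyq); have := dist_triangle (f w) y (rvq q).
rewrite mulr2n; lra.
Qed.

Lemma ev_mem_meas (R : realType) d0 (T : measurableType d0) m
    (f : T -> 'rV[R]_m) (S : set 'rV[R]_m) : mvec f -> closed S ->
  measurable [set w | S (f w)].
Proof.
move=> mf cS.
rewrite (_ : [set w | _] = [set w | forall dl : rat, 0 < (ratr dl : R) ->
   exists q : 'rV[rat]_m, (exists2 y, S y & eucl_dist y (rvq q) < ratr dl) /\
     eucl_dist (f w) (rvq q) < ratr dl]).
  apply: mP_all => dl; apply: mP_imp; apply: mP_ex => q; apply: mP_and.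
    exact: mP_const.
  apply: mP_lt; exact: mvec_dist.
apply/seteqP; split => w /=.
  move=> Sf dl dl0; have [q hq] := dense_rat (f w) dl0.
  by exists q; split => //; exists (f w).
move=> h; apply: closed_enorm => // e e0.
have e2 : 0 < e / 2 by rewrite divr_gt0.
have [dl /andP[dl0 dle]] := @rat_pos R (e / 2) e2.
have [q [[y Sy hy] hf]] := h dl dl0.
exists y => //; have := dist_triangle (f w) (rvq q) y; rewrite (dist_sym (rvq q) y); lra.
Qed.

Lemma sup_gt_iff (R : realType) (U : Type) (S : set U) (g : U -> \bar R) (e : \bar R) :
  (e < ereal_sup [set g x | x in S])%E <-> exists2 x, S x & (e < g x)%E.
Proof.
split.
  by move=> /ereal_sup_gt [_ [x Sx <-] h]; exists x.
move=> [x Sx h]; apply: (lt_le_trans h); apply: ereal_sup_ubound; by exists x.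
Qed.

Lemma inf_fin_gt_iff (R : realType) m k (v : 'I_k -> 'rV[R]_m) x (e : R) :
  (e%:E < ereal_inf [set (eucl_dist x y)%:E | y in [set v i | i in [set: 'I_k]]])%E <->
  forall i, e < eucl_dist x (v i).
Proof.
split.
  move=> h i; rewrite -lte_fin; apply: (lt_le_trans h); apply: ereal_inf_lbound.
  by exists (v i) => //; exists i.
move=> h; have [g g0 hg] := finite_gap h.
have lt1 : (e%:E < (e + g)%:E)%E by rewrite lte_fin; lra.
apply: (lt_le_trans lt1); apply/ereal_infP => _ [y [i _ <-] <-].
by rewrite lee_fin; exact: ltW.
Qed.

Lemma haus_char (R : realType) m k (v : 'I_k -> 'rV[R]_m) (S : set 'rV[R]_m) (e : R) :
  (e%:E < hausdorff [set v i | i in [set: 'I_k]] S)%E <->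
  (exists i, (e%:E < ereal_inf [set (eucl_dist (v i) y)%:E | y in S])%E) \/
  (exists2 x, S x & forall i, e < eucl_dist x (v i)).
Proof.
rewrite /hausdorff lt_max; split.
  move=> /orP[/sup_gt_iff [_ [i _ <-] h]|/sup_gt_iff [x Sx /inf_fin_gt_iff h]].
    by left; exists i.
  by right; exists x.
move=> [[i h]|[x Sx h]]; apply/orP.
  by left; apply/sup_gt_iff; exists (v i) => //; exists i.
by right; apply/sup_gt_iff; exists x => //; apply/inf_fin_gt_iff.
Qed.

Lemma mvec_X (R : realType) d0 (T : measurableType d0) d (X : nat -> T -> 'rV[R]_d) :
  (forall t, random_vector (X t)) -> forall t, mvec (X t).
Proof. by move=> HX t p; apply: rv_coord. Qed.

Lemma block_entry (T : Type) (R : realType) d (X : nat -> T -> 'rV[R]_d) r i w j l :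
  block X r i w ord0 (mxvec_index j l) = X (i * r + j)%N w ord0 l.
Proof. by rewrite /block (_ : ord0 = 0) // mxvecE mxE. Qed.

Lemma mvec_block (R : realType) d0 (T : measurableType d0) d (X : nat -> T -> 'rV[R]_d) r i :
  (forall t, mvec (X t)) -> mvec (block X r i).
Proof.
move=> mX p; case/mxvec_indexP: p => j l.
by under eq_fun do rewrite block_entry; exact: mX.
Qed.

Lemma mxvec_continuous (R : realType) r d : continuous (@mxvec R r d).
Proof.
move=> A U /nbhs_ballP [e e0 hU]; apply/nbhs_ballP; exists e => // B hB.
apply: hU; move: hB; rewrite -!ball_normE /ball_ /= => h.
rewrite -linearB /=; apply: norm_lt_entries => // i p.
rewrite (ord1 i); case/mxvec_indexP: p => j l.
rewrite mxvecE; exact: le_lt_trans (entry_le_norm _ _ _) h.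
Qed.

Lemma as_X (R : realType) d0 (T : measurableType d0) (P : probability T R) d
  (X : nat -> T -> 'rV[R]_d) (M : set 'rV[R]_d) :
  stationary P X -> closed M -> P (X 0%N @^-1` M) = 1%E ->
  forall t, P (X t @^-1` M) = 1%E.
Proof.
move=> Hs cM h0 t.
have := Hs 1%N (fun _ => 0%N) t M (borel_closed cM).
have E : forall s, (fun w => \matrix_(j < 1, l < d) X (0 + s)%N w ord0 l) = X s.
  move=> s; apply/funext => w; apply/matrixP => j l; by rewrite mxE (ord1 j) add0n.
rewrite E (E 0%N) => ->; exact: h0.
Qed.

Lemma as_Y (R : realType) d0 (T : measurableType d0) (P : probability T R) d
  (X : nat -> T -> 'rV[R]_d) r (S : set 'rV[R]_(r * d)) :
  stationary P X -> closed S -> P (block X r 0 @^-1` S) = 1%E ->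
  forall i, P (block X r i @^-1` S) = 1%E.
Proof.
move=> Hs cS h0 i.
have cB : closed [set A : 'M[R]_(r, d) | S (mxvec A)].
  move=> t ht; apply: (@preimage_closed _ _ (@mxvec R r d) S _ cS t ht) => x _.
  exact: mxvec_continuous.
have := Hs r (fun j => nat_of_ord j) (i * r)%N _ (borel_closed cB).
have E : forall s w, mxvec (\matrix_(j < r, l < d) X (j + s * r)%N w ord0 l) = block X r s w.
  by move=> s w; rewrite /block; congr mxvec; apply/matrixP => j l; rewrite !mxE addnC.
have E1 : forall s, (fun w => \matrix_(j < r, l < d) X (j + s * r)%N w ord0 l) @^-1` [set A | S (mxvec A)] = block X r s @^-1` S.
  by move=> s; apply/seteqP; split => w; rewrite /preimage /= E.
have E0 : (fun w => \matrix_(j < r, l < d) X (nat_of_ord j) w ord0 l) @^-1` [set A | S (mxvec A)] = block X r 0 @^-1` S.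
  rewrite -(E1 0%N); apply/seteqP; split => w; rewrite /preimage /=;
  by rewrite (_ : \matrix_(j < r, l < d) X (j + 0 * r)%N w ord0 l = \matrix_(j < r, l < d) X (nat_of_ord j) w ord0 l) //; apply/matrixP => j l; rewrite !mxE mul0n addn0.
by rewrite E1 E0 h0.
Qed.

Lemma null_ex (R : realType) d0 (T : measurableType d0) (P : probability T R)
  (F : nat -> set T) n : (forall k, measurable (F k)) ->
  (forall k, (k < n)%N -> P (F k) = 0%E) ->
  P [set w | exists2 k, (k < n)%N & F k w] = 0%E.
Proof.
move=> mF; elim: n => [|n IH] h0.
  by rewrite (_ : [set w | _] = set0) ?measure0 //; apply/seteqP; split => w // [].
have mS : forall n, measurable [set w | exists2 k, (k < n)%N & F k w].
  move=> n'; rewrite (_ : [set w | _] = [set w | exists k, (k < n')%N /\ F k w]).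
    by apply: mP_ex => k; apply: mP_and; [exact: mP_const | exact: mF].
  by apply/seteqP; split => w /=; [move=> [k h1 h2] | move=> [k [h1 h2]]]; exists k.
rewrite (_ : [set w | _] = [set w | exists2 k, (k < n)%N & F k w] `|` F n).
  apply: null_set_setU => //; first by apply: IH => k kn; apply: h0; lia.
  exact: h0.
apply/seteqP; split => w /=.
  by move=> [k]; rewrite ltnS leq_eqVlt => /orP[/eqP ->|kn] hk; [right|left; exists k].
by move=> [[k kn hk]|hn]; [exists k => //; lia | exists n].
Qed.

Definition bproj (R : realType) r d (j0 : 'I_r) (y : 'rV[R]_(r * d)) : 'rV[R]_d :=
  \row_l y ord0 (mxvec_index j0 l).

Lemma sum_proj_le (R : realType) r d (j0 : 'I_r) (v : 'rV[R]_(r * d)) :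
  \sum_(l < d) v ord0 (mxvec_index j0 l) ^+ 2 <= \sum_(p < r * d) v ord0 p ^+ 2.
Proof.
rewrite (reindex (fun x : 'I_r * 'I_d => mxvec_index x.1 x.2)) /=; last first.
  have [g h1 h2] := curry_mxvec_bij r d.
  exists (fun p => g p) => x _ /=.
    by case: x => a b; move: (h1 (a, b)) => /=; apply; rewrite inE.
  by move: (h2 x); case: (g x) => a b /=; apply.
rewrite -(pair_big xpredT xpredT (fun j l => v ord0 (mxvec_index j l) ^+ 2)) /=.
rewrite (bigD1 j0) //= lerDl; apply: sumr_ge0 => j _; apply: sumr_ge0 => l _.
exact: sqr_ge0.
Qed.

Lemma dist_proj_le (R : realType) r d (j0 : 'I_r) (y z : 'rV[R]_(r * d)) :
  eucl_dist (bproj j0 y) (bproj j0 z) <= eucl_dist y z.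
Proof.
rewrite /eucl_dist /enorm ler_sqrt ?sumsq_ge0 //.
rewrite (eq_bigr (fun l => (y - z) ord0 (mxvec_index j0 l) ^+ 2)).
  exact: sum_proj_le.
by move=> l _; rewrite !mxE.
Qed.

Lemma proj_block (T : Type) (R : realType) d (X : nat -> T -> 'rV[R]_d) r (j0 : 'I_r) i w :
  nat_of_ord j0 = 0%N -> bproj j0 (block X r i w) = X (i * r)%N w.
Proof.
move=> h; apply/rowP => l; rewrite mxE block_entry h addn0.
by rewrite (_ : ord0 = 0).
Qed.

Lemma nbhs_dist (R : realType) m (x : 'rV[R]_m) e : 0 < e ->
  nbhs x [set z | eucl_dist x z < e].
Proof.
move=> e0; apply/nbhs_ballP; exists (e / m.+1%:R).
  by rewrite /= divr_gt0 ?ltr0Sn.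
by move=> z hz; exact: ball_enorm.
Qed.

Lemma M_approx (R : realType) d0 (T : measurableType d0) (P : probability T R) d
  (X : nat -> T -> 'rV[R]_d) (HX : forall t, random_vector (X t))
  (M : set 'rV[R]_d) (HM : is_support P (X 0%N) M) r (j0 : 'I_r)
  (hj0 : nat_of_ord j0 = 0%N) (Mdr : set 'rV[R]_(r * d))
  (HMdr : is_support P (block X r 0) Mdr) :
  forall x, M x -> forall e, 0 < e -> exists2 y, Mdr y & eucl_dist x (bproj j0 y) < e.
Proof.
case: HM => cM PM minM; case: HMdr => cMdr PMdr minMdr.
set C := closure (bproj j0 @` Mdr).
have cC : closed C by exact: closed_closure.
have mXC : measurable (X 0%N @^-1` C) by apply: HX; exact: borel_closed.
have mY : measurable (block X r 0 @^-1` Mdr).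
  by apply: ev_mem_meas => //; apply: mvec_block; exact: mvec_X.
have sub : block X r 0 @^-1` Mdr `<=` X 0%N @^-1` C.
  move=> w h; rewrite /preimage /=; apply: subset_closure.
  by exists (block X r 0 w) => //; rewrite proj_block // mul0n.
have P1 : P (X 0%N @^-1` C) = 1%E.
  apply/eqP; rewrite eq_le probability_le1 //= -PMdr; apply: le_measure => //; by rewrite inE.
have MC := minM C cC P1.
move=> x Mx e e0; have := MC x Mx; rewrite /C /closure /= => /(_ _ (nbhs_dist x e0)).
by move=> [z [[y My <-] hz]]; exists y.
Qed.

Lemma part1 (R : realType) (d0 : measure_display)
  (T : measurableType d0) (P : probability T R) (d : nat)
  (X : nat -> T -> 'rV[R]_d)
  (HX : forall t, random_vector (X t))
  (Hstat : stationary P X)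
  (M : set 'rV[R]_d) (HM : is_support P (X 0%N) M)
  (n k r : nat) (eps : R) (Heps : 0 < eps)
  (Hr : (0 < r)%N) (Hkr : (k * r <= n)%N)
  (Mdr : set 'rV[R]_(r * d)) (HMdr : is_support P (block X r 0) Mdr) :
  (P [set w | (eps%:E < hausdorff [set X (t : 'I_n) w | t in [set: 'I_n]] M)%E]
     <= P [set w | (eps%:E < hausdorff [set block X r (i : 'I_k) w | i in [set: 'I_k]] Mdr)%E])%E.
Proof.
have mX := mvec_X HX.
have mY : forall i, mvec (block X r i) by move=> i; apply: mvec_block.
have cM : closed M by case: HM.
have cMdr : closed Mdr by case: HMdr.
set j0 : 'I_r := Ordinal Hr.
set E1 := [set w | _]; set E2 := [set w | _].
have mE1 : measurable E1.
  rewrite /E1 (_ : [set w | _] = [set w | (exists t : 'I_n, (eps%:E < ereal_inf [set (eucl_dist (X t w) y)%:E | y in M])%E) \/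
    (exists2 x, M x & forall t : 'I_n, eps < eucl_dist x (X t w))]).
    apply: mP_or; first by apply: mP_ex => t; apply: ev_inf_meas.
    exact: (@ev_exists_meas _ _ _ _ _ (fun t : 'I_n => X t)).
  by apply/seteqP; split => w /=; rewrite (haus_char (fun t : 'I_n => X t w)).
have mE2 : measurable E2.
  rewrite /E2 (_ : [set w | _] = [set w | (exists i : 'I_k, (eps%:E < ereal_inf [set (eucl_dist (block X r i w) y)%:E | y in Mdr])%E) \/
    (exists2 x, Mdr x & forall i : 'I_k, eps < eucl_dist x (block X r i w))]).
    apply: mP_or; first by apply: mP_ex => i; apply: ev_inf_meas.
    exact: (@ev_exists_meas _ _ _ _ _ (fun i : 'I_k => block X r i)).
  by apply/seteqP; split => w /=; rewrite (haus_char (fun i : 'I_k => block X r i w)).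
set N1 := [set w | exists2 t, (t < n)%N & (~` (X t @^-1` M)) w].
have mN1 : forall t, measurable (~` (X t @^-1` M)).
  by move=> t; apply: measurableC; apply: HX; exact: borel_closed.
have PN1 : P N1 = 0%E.
  apply: null_ex => // t _; rewrite probability_setC; last by apply: HX; exact: borel_closed.
  by rewrite (as_X Hstat cM) ?subee //; case: HM.
have mN1' : measurable N1.
  rewrite /N1 (_ : [set w | _] = [set w | exists t, (t < n)%N /\ (~` (X t @^-1` M)) w]).
    by apply: mP_ex => t; apply: mP_and; [exact: mP_const | exact: mN1].
  by apply/seteqP; split => w /=; [move=> [t h1 h2] | move=> [t [h1 h2]]]; exists t.
rewrite -(measureU0 mE2 mN1' PN1); apply: le_measure; rewrite ?inE //.
  exact: measurableU.
move=> w; rewrite /E1 /= (haus_char (fun t : 'I_n => X t w)).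
case: (pselect (N1 w)) => [hN|hN]; first by right.
have inM : forall t : 'I_n, M (X t w).
  by move=> t; apply: contrapT => ht; apply: hN; exists t.
move=> [[t ht]|[x Mx hx]].
  exfalso; have : (ereal_inf [set (eucl_dist (X t w) y)%:E | y in M] <= 0%:E)%E.
    by apply: ereal_inf_lbound; exists (X t w) => //; rewrite dist_xx.
  by move=> h; have := lt_le_trans ht h; rewrite lte_fin; lra.
left; rewrite /E2 /= (haus_char (fun i : 'I_k => block X r i w)); right.
have [g g0 hg] := finite_gap hx.
have [y My hy] := M_approx HX HM (erefl _ : nat_of_ord j0 = 0%N) HMdr Mx g0.
exists y => // i.
have hi : (i * r < n)%N.
  by apply: (leq_trans _ Hkr); rewrite ltn_pmul2r.
have := hg (Ordinal hi); rewrite /= => h1.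
have := dist_proj_le j0 y (block X r i w); rewrite proj_block // => h2.
have := dist_triangle x (bproj j0 y) (X (i * r)%N w); lra.
Qed.

Definition prb (R : realType) d0 (T : measurableType d0) (P : probability T R) (S : set T) : R :=
  fine (P S).

Lemma prE (R : realType) d0 (T : measurableType d0) (P : probability T R) S :
  measurable S -> P S = (prb P S)%:E.
Proof.
move=> mS; rewrite /prb fineK // ge0_fin_numE //.
exact: (le_lt_trans (probability_le1 P mS) (ltey _)).
Qed.

Lemma pr_ge0 (R : realType) d0 (T : measurableType d0) (P : probability T R) S :
  measurable S -> 0 <= prb P S.
Proof. by move=> mS; rewrite -lee_fin -prE. Qed.

Lemma pr_le1 (R : realType) d0 (T : measurableType d0) (P : probability T R) S :
  measurable S -> prb P S <= 1.
Proof. by move=> mS; rewrite -lee_fin -prE // probability_le1. Qed.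

Lemma pr_le (R : realType) d0 (T : measurableType d0) (P : probability T R) A B :
  measurable A -> measurable B -> A `<=` B -> prb P A <= prb P B.
Proof.
by move=> mA mB AB; rewrite -lee_fin -!prE //; apply: le_measure; rewrite ?inE.
Qed.

Lemma pr_setC (R : realType) d0 (T : measurableType d0) (P : probability T R) A :
  measurable A -> prb P (~` A) = 1 - prb P A.
Proof.
move=> mA; apply/EFin_inj; rewrite -prE ?probability_setC ?prE //.
exact: measurableC.
Qed.

Lemma pr_U2 (R : realType) d0 (T : measurableType d0) (P : probability T R) A B :
  measurable A -> measurable B -> prb P (A `|` B) <= prb P A + prb P B.
Proof.
move=> mA mB; rewrite -lee_fin EFinD -!prE //; last exact: measurableU.
exact: measureU2.
Qed.

Lemma pr_bigU (R : realType) d0 (T : measurableType d0) (P : probability T R) N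
  (Q : {pred 'I_N}) (F : 'I_N -> set T) :
  (forall j, measurable (F j)) -> trivIset setT F ->
  prb P (\big[setU/set0]_(j < N | Q j) F j) = \sum_(j < N | Q j) prb P (F j).
Proof.
move=> mF tF; apply/EFin_inj; rewrite -prE; last first.
  by apply: bigsetU_measurable => j _; exact: mF.
rewrite measure_bigsetU_ord // -sumEFin; apply: eq_bigr => j _; exact: prE.
Qed.

Lemma min_idx N (Q : 'I_N -> Prop) j : Q j ->
  exists j', Q j' /\ forall l : 'I_N, (l < j')%N -> ~ Q l.
Proof.
move=> Qj; have Qj' : `[< Q j >] by apply/asboolP.
case: (@arg_minnP _ j (fun i => `[< Q i >]) (fun i : 'I_N => nat_of_ord i) Qj') => i /asboolP Qi hi.
exists i; split => // l li Ql.
have := hi l (introT (asboolP _) Ql); rewrite leqNgt li //.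
Qed.

Lemma bigsetU_mem (T : Type) N (Q : pred 'I_N) (F : 'I_N -> set T) w :
  (\big[setU/set0]_(l < N | Q l) F l) w <-> exists2 l, Q l & F l w.
Proof.
split.
  by elim/big_rec: _ => [//|i S Qi IH [Fi|/IH//]]; exists i.
by move=> [l Ql Fl]; rewrite (bigD1 l) //=; left.
Qed.

Lemma core_ineq (R : realType) d0 (T : measurableType d0) (P : probability T R) m k
  (Y : nat -> T -> 'rV[R]_m) (mY : forall i, mvec (Y i))
  (S : set 'rV[R]_m) (cS : closed S) (PS : P (Y 0%N @^-1` S) = 1%E)
  N (xs : 'I_N -> 'rV[R]_m) (Sxs : forall j, S (xs j)) (eps : R) (eps0 : 0 < eps)
  (cov : forall y, S y -> exists j, eucl_dist (xs j) y < eps / 8)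
  (s q : R) (s0 : 0 <= s)
  (hs : forall x, S x -> prb P [set w | forall i : 'I_k, eps / 2 < eucl_dist (Y i w) x] <= s)
  (hq : forall x, S x -> prb P [set w | eps / 4 < eucl_dist (Y 0%N w) x] <= q) :
  (1 - q) * prb P [set w | exists2 x, S x & forall i : 'I_k, eps < eucl_dist x (Y i w)] <= s /\
  prb P [set w | exists2 x, S x & forall i : 'I_k, eps < eucl_dist x (Y i w)] <= N%:R * s.
Proof.
set A := [set w | exists2 x, S x & _].
have mA : measurable A by exact: (@ev_exists_meas _ _ _ _ _ (fun i : 'I_k => Y i)).
set eta := eps / 8.
set Aj := fun j : 'I_N => [set w | forall i : 'I_k, eps - eta < eucl_dist (xs j) (Y i w)].
have mAj : forall j, measurable (Aj j).
  by move=> j; apply: mP_all => i; apply: mP_gt; apply: mvec_dist'.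
set A' := fun j : 'I_N => Aj j `\` \big[setU/set0]_(l < N | (l < j)%N) Aj l.
have mA' : forall j, measurable (A' j).
  by move=> j; apply: measurableD => //; apply: bigsetU_measurable => l _.
have tA' : trivIset setT A'.
  apply/trivIsetP => j l _ _ jl; apply/seteqP; split => // w [[h1 h2] [h3 h4]].
  case: (ltngtP j l) => [lt|lt|eq]; last by move: jl; rewrite (val_inj eq) eqxx.
    by apply: h4; apply/bigsetU_mem; exists j.
  by apply: h2; apply/bigsetU_mem; exists l.
set C := fun m : 'I_N => [set w | eucl_dist (xs m) (Y 0%N w) < eta /\
   forall l : 'I_N, (l < m)%N -> ~ (eucl_dist (xs l) (Y 0%N w) < eta)].
have mC : forall m, measurable (C m).
  move=> m0; apply: mP_and; first by apply: mP_lt; apply: mvec_dist'.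
  apply: mP_all => l; apply: mP_imp; apply: mP_not; apply: mP_lt; exact: mvec_dist'.
have tC : trivIset setT C.
  apply/trivIsetP => j l _ _ jl; apply/seteqP; split => // w [[h1 h2] [h3 h4]].
  case: (ltngtP j l) => [lt|lt|eq]; last by move: jl; rewrite (val_inj eq) eqxx.
    exact: h4 _ lt h1.
  exact: h2 _ lt h3.
pose rel := fun j m : 'I_N => eucl_dist (xs j) (xs m) < eps / 4 + eta.
have mS0 : measurable (Y 0%N @^-1` S) by exact: ev_mem_meas.
have prS : prb P (Y 0%N @^-1` S) = 1 by apply/EFin_inj; rewrite -prE.
have eta0 : 0 < eta by rewrite /eta divr_gt0.
have F1 : prb P A <= \sum_(j < N) prb P (A' j).
  rewrite -pr_bigU //; apply: pr_le => //; first by apply: bigsetU_measurable.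
  move=> w [x Sx hx]; have [j hj] := cov x Sx.
  have Ajw : Aj j w.
    move=> i; have := hx i; have := dist_triangle x (xs j) (Y i w).
    rewrite (dist_sym x (xs j)) /eta; lra.
  have [j' [Aj' hmin]] := @min_idx N (fun j => Aj j w) j Ajw.
  apply/bigsetU_mem; exists j' => //; split => // /bigsetU_mem [l lj' Al].
  exact: hmin _ lj' Al.
have F6 : forall j, prb P (A' j) <= s.
  move=> j; apply: le_trans (hs _ (Sxs j)).
  apply: pr_le => //; first by apply: mP_all => i; apply: mP_gt; apply: mvec_dist.
  move=> w [h _] i; have := h i; rewrite dist_sym /eta; lra.
have F3 : forall m0, \sum_(j < N | rel j m0) prb P (A' j) <= s.
  move=> m0; rewrite -pr_bigU //; apply: le_trans (hs _ (Sxs m0)).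
  apply: pr_le => //; first by apply: bigsetU_measurable.
    by apply: mP_all => i; apply: mP_gt; apply: mvec_dist.
  move=> w /bigsetU_mem [j rj [h _]] i.
  have := h i; have := dist_triangle (xs j) (xs m0) (Y i w).
  move: rj; rewrite /rel (dist_sym (Y i w)) /eta => rj; lra.
have F4 : \sum_(m0 < N) prb P (C m0) <= 1.
  rewrite -pr_bigU //; apply: pr_le1; exact: bigsetU_measurable.
have F2 : forall j, 1 - q <= \sum_(m0 < N | rel j m0) prb P (C m0).
  move=> j; set QE := [set w | eps / 4 < eucl_dist (Y 0%N w) (xs j)].
  have mQE : measurable QE by apply: mP_gt; apply: mvec_dist.
  have h1 : 1 - q <= prb P (~` QE) by rewrite pr_setC //; have := hq _ (Sxs j); lra.
  apply: (le_trans h1).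
  have sub : ~` QE `<=` (~` (Y 0%N @^-1` S)) `|` \big[setU/set0]_(m0 < N | rel j m0) C m0.
    move=> w hw; case: (pselect (S (Y 0%N w))) => [SY|nS]; last by left.
    right; have [m1 hm1] := cov _ SY.
    have [m2 [hm2 hmin]] := @min_idx N (fun m => eucl_dist (xs m) (Y 0%N w) < eta) m1 hm1.
    apply/bigsetU_mem; exists m2; last by split.
    rewrite /rel; have := dist_triangle (xs j) (Y 0%N w) (xs m2).
    have hw' : eucl_dist (Y 0%N w) (xs j) <= eps / 4 by rewrite leNgt; apply/negP.
    rewrite (dist_sym (Y 0%N w) (xs m2)) (dist_sym (Y 0%N w) (xs j)) in hw' *.
    rewrite /eta in hm2 *; lra.
  apply: le_trans (pr_le P _ _ sub) _.
  - exact: measurableC.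
  - by apply: measurableU; [exact: measurableC | exact: bigsetU_measurable].
  apply: le_trans (pr_U2 P _ _) _.
  - exact: measurableC.
  - exact: bigsetU_measurable.
  by rewrite pr_setC // prS subrr add0r pr_bigU.
have a0 : forall j, 0 <= prb P (A' j) by move=> j; apply: pr_ge0.
have b0 : forall m0, 0 <= prb P (C m0) by move=> m0; apply: pr_ge0.
have pA0 : 0 <= prb P A by apply: pr_ge0.
split; last first.
  apply: (le_trans F1); apply: (@le_trans _ _ (\sum_(j < N) s)).
    by apply: ler_sum => j _; exact: F6.
  by rewrite sumr_const card_ord mulr_natl.
case: (lerP q 1) => hq1; last first.
  have : (1 - q) * prb P A <= 0 by rewrite mulr_le0_ge0 //; lra.
  move=> h; exact: le_trans h s0.
have q0 : 0 <= 1 - q by lra.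
apply: (le_trans (ler_wpM2l q0 F1)); rewrite mulr_sumr.
apply: (@le_trans _ _ (\sum_(j < N) prb P (A' j) * \sum_(m0 < N | rel j m0) prb P (C m0))).
  by apply: ler_sum => j _; rewrite mulrC; apply: ler_wpM2l => //; exact: F2.
have -> : \sum_(j < N) prb P (A' j) * \sum_(m0 < N | rel j m0) prb P (C m0) =
    \sum_(m0 < N) prb P (C m0) * \sum_(j < N | rel j m0) prb P (A' j).
  under eq_bigr do rewrite mulr_sumr big_mkcond /=.
  rewrite exchange_big /=; apply: eq_bigr => m0 _.
  rewrite mulr_sumr [in RHS]big_mkcond /=; apply: eq_bigr => j _.
  by case: ifP => _; rewrite ?mulr0 // mulrC.
apply: (@le_trans _ _ (\sum_(m0 < N) prb P (C m0) * s)).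
  by apply: ler_sum => m0 _; apply: ler_wpM2l => //; exact: F3.
rewrite -mulr_suml; rewrite -[leRHS]mul1r; exact: ler_wpM2r.
Qed.


Lemma norm_le_entries (R : realType) m n (A : 'M[R]_(m, n)) e : 0 <= e ->
  (forall i j, `|A i j| <= e) -> `|A| <= e.
Proof.
move=> e0 h; rewrite /Num.norm /= mx_normrE.
by apply/bigmax_leP; split => //= k _; exact: h.
Qed.

Lemma finite_cover (R : realType) m (S : set 'rV[R]_m) : compact S ->
  forall e : R, 0 < e -> exists N, exists xs : 'I_N -> 'rV[R]_m,
    (forall j, S (xs j)) /\ (forall y, S y -> exists j, eucl_dist (xs j) y < e).
Proof.
rewrite compact_cover => cS e e0.
have rho0 : 0 < e / m.+1%:R by rewrite divr_gt0 ?ltr0Sn.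
have := cS _ S (fun x => ball x (e / m.+1%:R)) (fun x _ => ball_open x _).
case.
  by move=> y Sy; exists y => //; exact: ballxx.
move=> D' sub hD'; exists (size (finmap.enum_fset D')), (fun j => nth 0 (finmap.enum_fset D') j); split.
  by move=> j; have := sub _ (mem_nth 0 (ltn_ord j)); rewrite inE.
move=> y /hD' [x xD hx].
have xD' : x \in (finmap.enum_fset D') by [].
have hi : (index x (finmap.enum_fset D') < size (finmap.enum_fset D'))%N by rewrite index_mem.
exists (Ordinal hi); rewrite /= nth_index //.
exact: ball_enorm.
Qed.

Lemma Mdr_compact (R : realType) d0 (T : measurableType d0) (P : probability T R) d
  (X : nat -> T -> 'rV[R]_d) (HX : forall t, random_vector (X t))
  (Hstat : stationary P X) (M : set 'rV[R]_d) (HMc : compact M)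
  (HM : is_support P (X 0%N) M) r (Mdr : set 'rV[R]_(r * d))
  (HMdr : is_support P (block X r 0) Mdr) : compact Mdr.
Proof.
have [B [_ hB]] := compact_bounded HMc.
set B1 := B + 1.
have hMB : forall x, M x -> `|x| <= B1 by move=> x Mx; apply: (hB B1) => //; rewrite /B1; lra.
case: HM => cM PM minM; case: HMdr => cMdr PMdr minMdr.
set Kr := [set y : 'rV[R]_(r * d) | `|y| <= B1].
have cK : closed Kr.
  rewrite (_ : Kr = ~` [set y | B1 < `|y|]).
    apply: open_closedC.
    rewrite (_ : [set y | B1 < `|y|] = (fun y : 'rV[R]_(r * d) => `|y|) @^-1` `]B1, +oo[%classic).
      apply: open_comp; last exact: interval_open.
      by move=> y _; exact: norm_continuous.
    by apply/seteqP; split => y /=; rewrite in_itv /= andbT.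
  apply/seteqP; split => y; rewrite /Kr /=.
    by move=> h; apply/negP; rewrite -leNgt.
  by move/negP; rewrite -leNgt.
set N := [set w | exists2 j, (j < r)%N & (~` (X j @^-1` M)) w].
have mN1 : forall t, measurable (~` (X t @^-1` M)).
  by move=> t; apply: measurableC; apply: HX; exact: borel_closed.
have PN : P N = 0%E.
  apply: null_ex => // t _; rewrite probability_setC; last by apply: HX; exact: borel_closed.
  by rewrite (as_X Hstat cM PM) subee.
have mN : measurable N.
  rewrite /N (_ : [set w | _] = [set w | exists t, (t < r)%N /\ (~` (X t @^-1` M)) w]).
    by apply: mP_ex => t; apply: mP_and; [exact: mP_const | exact: mN1].
  by apply/seteqP; split => w /=; [move=> [t h1 h2] | move=> [t [h1 h2]]]; exists t.
have mK : measurable (block X r 0 @^-1` Kr).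
  by apply: ev_mem_meas => //; apply: mvec_block; exact: mvec_X.
have B10 : 0 <= B1.
  case: (pselect (exists x, M x)) => [[x Mx]|hM].
    exact: le_trans (normr_ge0 _) (hMB _ Mx).
  have E0 : X 0%N @^-1` M = set0.
    by apply/seteqP; split => w //= hw; apply: hM; exists (X 0%N w).
  move: PM; rewrite E0 measure0.
  by move=> /eqP; rewrite eq_sym onee_eq0.
have subK : ~` N `<=` block X r 0 @^-1` Kr.
  move=> w hN; rewrite /preimage /= /Kr /=.
  apply: norm_le_entries => // i p; rewrite (ord1 i).
  case/mxvec_indexP: p => j l; rewrite block_entry mul0n add0n.
  apply: le_trans (entry_le_norm _ _ _) _; apply: hMB.
  by apply: contrapT => h; apply: hN; exists (nat_of_ord j) => //.
have PK : P (block X r 0 @^-1` Kr) = 1%E.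
  apply/eqP; rewrite eq_le probability_le1 //=.
  have : P (~` N) = 1%E by rewrite probability_setC // PN sube0.
  move=> <-; apply: le_measure => //; rewrite inE //; exact: measurableC.
have MK := minMdr Kr cK PK.
apply: bounded_closed_compact => //.
exists B1; split; first exact: num_real.
by move=> x hx y /MK hy; rewrite /= (le_trans hy) // ltW.
Qed.

Lemma sup01 (R : realType) (U : Type) (D : set U) (g : U -> \bar R) :
  (exists x, D x) -> (forall x, D x -> (0 <= g x <= 1)%E) ->
  [/\ ereal_sup [set g x | x in D] = (fine (ereal_sup [set g x | x in D]))%:E,
      0 <= fine (ereal_sup [set g x | x in D]) <= 1 &
      forall x, D x -> (g x <= ereal_sup [set g x | x in D])%E].
Proof.
move=> [x0 Dx0] hg.
have ub : forall x, D x -> (g x <= ereal_sup [set g x | x in D])%E.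
  by move=> x Dx; apply: ereal_sup_ubound; exists x.
have h0 : (0 <= ereal_sup [set g x | x in D])%E.
  by have /andP[h _] := hg _ Dx0; exact: le_trans h (ub _ Dx0).
have h1 : (ereal_sup [set g x | x in D] <= 1)%E.
  by apply/ereal_supP => _ [x Dx <-]; have /andP[_ h] := hg _ Dx.
have fin : ereal_sup [set g x | x in D] \is a fin_num.
  by rewrite ge0_fin_numE // (le_lt_trans h1) // ltey.
split => //; first by rewrite fineK.
rewrite -!lee_fin fineK // h0 /=; exact: h1.
Qed.

Lemma part2 (R : realType) (d0 : measure_display)
  (T : measurableType d0) (P : probability T R) (d : nat)
  (X : nat -> T -> 'rV[R]_d)
  (HX : forall t, random_vector (X t))
  (Hstat : stationary P X)
  (M : set 'rV[R]_d) (HMc : compact M) (HM : is_support P (X 0%N) M)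
  (k r : nat) (eps : R) (Heps : 0 < eps)
  (Mdr : set 'rV[R]_(r * d)) (HMdr : is_support P (block X r 0) Mdr) :
  (P [set w | (hausdorff [set block X r (i : 'I_k) w | i in [set: 'I_k]] Mdr > eps%:E)%E]
     <= ereal_sup [set P [set w | (\big[mine/+oo%E]_(i < k)
                                     (eucl_dist (block X r i w) x)%:E
                                   > (eps / 2)%:E)%E] | x in Mdr]
        / (1 - ereal_sup [set P [set w | ((eucl_dist (block X r 0 w) x)%:E
                                          > (eps / 4)%:E)%E] | x in Mdr]))%E.
Proof.
have mX := mvec_X HX.
have mY : forall i, mvec (block X r i) by move=> i; apply: mvec_block.
have cMdr : closed Mdr by case: HMdr.
have PMdr : P (block X r 0 @^-1` Mdr) = 1%E by case: HMdr.
have neMdr : exists x, Mdr x.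
  case: (pselect (exists x, Mdr x)) => // hM.
  have E0 : block X r 0 @^-1` Mdr = set0.
    by apply/seteqP; split => w //= hw; apply: hM; exists (block X r 0 w).
  by move: PMdr; rewrite E0 measure0 => /eqP; rewrite eq_sym onee_eq0.
have cpt := Mdr_compact HX Hstat HMc HM HMdr.
have eps8 : 0 < eps / 8 by rewrite divr_gt0.
have [N [xs [Sxs cov]]] := finite_cover cpt eps8.
set SE := fun x => [set w | forall i : 'I_k, eps / 2 < eucl_dist (block X r i w) x].
have ESE : forall x, [set w | (\big[mine/+oo%E]_(i < k) (eucl_dist (block X r i w) x)%:E > (eps / 2)%:E)%E] = SE x.
  move=> x; apply/seteqP; split => w /=.
    by move=> /bigmin_gtP [_ h] i; rewrite -lte_fin; apply: h.
  by move=> h; apply/bigmin_gtP; split => [|i _]; rewrite ?ltey // lte_fin; apply: h.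
set QE := fun x => [set w | eps / 4 < eucl_dist (block X r 0 w) x].
have EQE : forall x, [set w | ((eucl_dist (block X r 0 w) x)%:E > (eps / 4)%:E)%E] = QE x.
  by move=> x; apply/seteqP; split => w /=; rewrite lte_fin.
have -> : [set P [set w | (\big[mine/+oo%E]_(i < k) (eucl_dist (block X r i w) x)%:E > (eps / 2)%:E)%E] | x in Mdr] = [set P (SE x) | x in Mdr].
  by apply/seteqP; split => _ [x Mx <-]; exists x => //; rewrite ESE.
have -> : [set P [set w | ((eucl_dist (block X r 0 w) x)%:E > (eps / 4)%:E)%E] | x in Mdr] = [set P (QE x) | x in Mdr].
  by apply/seteqP; split => _ [x Mx <-]; exists x => //; rewrite EQE.
have mSE : forall x, measurable (SE x).
  by move=> x; apply: mP_all => i; apply: mP_gt; apply: mvec_dist.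
have mQE : forall x, measurable (QE x).
  by move=> x; apply: mP_gt; apply: mvec_dist.
have [sE /andP[s0 s1] sub] := @sup01 R _ Mdr (fun x => P (SE x)) neMdr
  (fun x _ => introT andP (conj (measure_ge0 _ _) (probability_le1 _ (mSE x)))).
have [qE /andP[q0 q1] qub] := @sup01 R _ Mdr (fun x => P (QE x)) neMdr
  (fun x _ => introT andP (conj (measure_ge0 _ _) (probability_le1 _ (mQE x)))).
set s := fine _ in sE s0 s1; set q := fine _ in qE q0 q1.
rewrite sE qE; rewrite sE in sub; rewrite qE in qub.
have hs : forall x, Mdr x -> prb P (SE x) <= s.
  by move=> x Mx; rewrite -lee_fin -prE //; exact: sub.
have hq : forall x, Mdr x -> prb P (QE x) <= q.
  by move=> x Mx; rewrite -lee_fin -prE //; exact: qub.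
have [c1 c2] := @core_ineq R d0 T P _ k (block X r) mY Mdr cMdr PMdr N xs Sxs eps Heps cov s q s0 hs hq.
set A := [set w | exists2 x, Mdr x & forall i : 'I_k, eps < eucl_dist x (block X r i w)] in c1 c2.
have mA : measurable A by exact: (@ev_exists_meas _ _ _ _ _ (fun i : 'I_k => block X r i)).
set E2 := [set w | _].
have mE2 : measurable E2.
  rewrite /E2 (_ : [set w | _] = [set w | (exists i : 'I_k, (eps%:E < ereal_inf [set (eucl_dist (block X r i w) y)%:E | y in Mdr])%E) \/
    (exists2 x, Mdr x & forall i : 'I_k, eps < eucl_dist x (block X r i w))]).
    apply: mP_or; first by apply: mP_ex => i; apply: ev_inf_meas.
    exact: (@ev_exists_meas _ _ _ _ _ (fun i : 'I_k => block X r i)).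
  by apply/seteqP; split => w /=; rewrite (haus_char (fun i : 'I_k => block X r i w)).
set N2 := [set w | exists2 i, (i < k)%N & (~` (block X r i @^-1` Mdr)) w].
have mN2i : forall i, measurable (~` (block X r i @^-1` Mdr)).
  by move=> i; apply: measurableC; exact: ev_mem_meas.
have PN2 : P N2 = 0%E.
  apply: null_ex => // i _; rewrite probability_setC; last exact: ev_mem_meas.
  by rewrite (as_Y Hstat cMdr PMdr) subee.
have mN2 : measurable N2.
  rewrite /N2 (_ : [set w | _] = [set w | exists t, (t < k)%N /\ (~` (block X r t @^-1` Mdr)) w]).
    by apply: mP_ex => t; apply: mP_and; [exact: mP_const | exact: mN2i].
  by apply/seteqP; split => w /=; [move=> [t h1 h2] | move=> [t [h1 h2]]]; exists t.
have E2A : prb P E2 <= prb P A.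
  rewrite -lee_fin -!prE // -(measureU0 mA mN2 PN2); apply: le_measure; rewrite ?inE //.
    exact: measurableU.
  move=> w; rewrite /E2 /= (haus_char (fun i : 'I_k => block X r i w)).
  case: (pselect (N2 w)) => [hN|hN]; first by right.
  have inS : forall i : 'I_k, Mdr (block X r i w).
    by move=> i; apply: contrapT => hi; apply: hN; exists i.
  move=> [[i hi]|hA]; last by left.
  exfalso; have : (ereal_inf [set (eucl_dist (block X r i w) y)%:E | y in Mdr] <= 0%:E)%E.
    by apply: ereal_inf_lbound; exists (block X r i w) => //; rewrite dist_xx.
  by move=> h; have := lt_le_trans hi h; rewrite lte_fin; lra.
have pA0 : 0 <= prb P A by apply: pr_ge0.
rewrite prE // -EFinB.
case: (ltrP q 1) => hq1.
  have q10 : 0 < 1 - q by lra.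
  rewrite inver gt_eqF // -EFinM lee_fin.
  apply: (le_trans E2A); rewrite ler_pdivlMr // mulrC //.
have -> : q = 1 by apply/eqP; rewrite eq_le q1 hq1.
rewrite subrr inver eqxx.
case: (ltrP 0 s) => hs0.
  by rewrite gt0_muley ?lte_fin // leey.
have s00 : s = 0 by apply/eqP; rewrite eq_le hs0 s0.
rewrite s00 mul0e lee_fin; apply: (le_trans E2A); apply: (le_trans c2).
by rewrite s00 mulr0.
Qed.

Theorem proposition3p1 (R : realType) (d0 : measure_display)
  (T : measurableType d0) (P : probability T R) (d : nat)
  (X : nat -> T -> 'rV[R]_d)
  (HX : forall t, random_vector (X t))
  (Hstat : stationary P X)
  (M : set 'rV[R]_d) (HMc : compact M) (HM : is_support P (X 0%N) M)
  (n k r : nat) (eps : R) (Hn : (1 <= n)%N) (Heps : 0 < eps)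
  (Hk : (0 < k)%N) (Hr : (0 < r)%N) (Hkr : (k * r <= n)%N)
  (Mdr : set 'rV[R]_(r * d)) (HMdr : is_support P (block X r 0) Mdr) :
  let Xn := fun w => [set X (t : 'I_n) w | t in [set: 'I_n]] in
  let Yk := fun w => [set block X r (i : 'I_k) w | i in [set: 'I_k]] in
  (P [set w | (hausdorff (Xn w) M > eps%:E)%E]
     <= P [set w | (hausdorff (Yk w) Mdr > eps%:E)%E])%E /\
  (P [set w | (hausdorff (Yk w) Mdr > eps%:E)%E]
     <= ereal_sup [set P [set w | (\big[mine/+oo%E]_(i < k)
                                     (eucl_dist (block X r i w) x)%:E
                                   > (eps / 2)%:E)%E] | x in Mdr]
        / (1 - ereal_sup [set P [set w | ((eucl_dist (block X r 0 w) x)%:E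
                                          > (eps / 4)%:E)%E] | x in Mdr]))%E.
Proof.
move=> Xn Yk; split.
  exact: (@part1 R d0 T P d X HX Hstat M HM n k r eps Heps Hr Hkr Mdr HMdr).
exact: (@part2 R d0 T P d X HX Hstat M HMc HM k r eps Heps Mdr HMdr).
Qed.
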